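(* Let $G=\bigl((f_j)_{j=1}^n;(\mu^{R})_{\emptyset\ne R\subseteq[n]}\bigr)$ be an $n$-resource selection game. (a) Every Nash equilibrium of $G$ is a strong Nash equilibrium. (b) If there exists a Nash equilibrium $s$ of $G$ such that for every $j\in[n]$, $h^s_j$ is not a plateau height of $f_j$, then every Nash equilibrium of $G$ is a super-strong Nash equilibrium.
   Context: Write $[n]=\{1,\ldots,n\}$ and $\mathbb{R}_{\ge}=[0,\infty)$. An $n$-resource selection game is a pair $G=\bigl((f_j)_{j=1}^n;(\mu^{R})_{\emptyset\ne R\subseteq[n]}\bigr)$ where each $f_j:\mathbb{R}_{\ge}\to\mathbb{R}$ is nondecreasing and $\mu^R\in\mathbb{R}_{\ge}$ for every nonempty $R\subseteq[n]$. A consumption profile is a map $s$ assigning to each nonempty $R\subseteq[n]$ a vector $s(R)\in\mathbb{R}_{\ge}^{[n]}$ with $s_j(R)=0$ for $j\notin R$ and $\sum_{j}s_j(R)=\mu^R$. The load of resource $j$ is $\mu^s_j=\sum_{R}s_j(R)$ and its cost is $h^s_j=f_j(\mu^s_j)$. $s$ is a Nash equilibrium if for every nonempty $R$, every $k$ with $s_k(R)>0$ and every $j\in R$, $h^s_k\le h^s_j$. For a Nash equilibrium $s$ and $R$ with $\mu^R>0$, let $h^R=h^s_k$ for any $k$ with $s_k(R)>0$. A Nash equilibrium $s$ is strong if there is no consumption profile $s'\ne s$ such that for every $R$ and every $k$ with $s'_k(R)>s_k(R)$, $h^{s'}_k<h^R$. It is super-strong if there is no consumption profile $s'$ such that for every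 $R$ and every $k$ with $s'_k(R)>s_k(R)$, $h^{s'}_k\le h^R$, and additionally there is at least one pair $(R,k)$ with $s'_k(R)>0$ and $h^{s'}_k<h^R$. A real $h$ is a plateau height of a nondecreasing $f$ if there are $x\ne y$ with $f(x)=f(y)=h$. *)

(* Defs.v *)
(* resources are 'I_n, subsets R of [n] are {set 'I_n},
   reals are an arbitrary realFieldType (statement is purely order-algebraic). *)
From HB Require Import structures.
From mathcomp Require Import all_boot all_order all_algebra.
Set Implicit Arguments. Unset Strict Implicit. Unset Printing Implicit Defensive.
Import Order.TTheory GRing.Theory Num.Theory.
Local Open Scope ring_scope.

Section Game.
Variables (R : realFieldType) (n : nat).
(* cost functions f_j, defined (meaningfully) on [0, oo) *)
Variable f : 'I_n -> R -> R.
Variable mu : {set 'I_n} -> R.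

Definition is_game : Prop :=
  (forall j x y, 0 <= x -> x <= y -> f j x <= f j y) /\
  (forall A : {set 'I_n}, A != set0 -> 0 <= mu A).

(* profiles: s A j = s_j(A) *)
Definition profile := {set 'I_n} -> 'I_n -> R.

Definition consumption_profile (s : profile) : Prop :=
  forall A : {set 'I_n}, A != set0 ->
    (forall j, 0 <= s A j) /\ (forall j, j \notin A -> s A j = 0) /\
    \sum_j s A j = mu A.

Definition load (s : profile) (j : 'I_n) : R :=
  \sum_(A : {set 'I_n} | A != set0) s A j.

Definition cost (s : profile) (j : 'I_n) : R := f j (load s j).

Definition nash (s : profile) : Prop :=
  forall A : {set 'I_n}, A != set0 ->
    forall k j, 0 < s A k -> j \in A -> cost s k <= cost s j.

(* h^A = cost of any resource k with s_k(A) > 0; "c < h^A" is rendered as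
   "c < cost s k for every k with s_k(A) > 0" (all these costs coincide at a
   Nash equilibrium, and such k exists whenever it is used below). *)
Definition lt_hR (s : profile) (A : {set 'I_n}) (c : R) : Prop :=
  forall k, 0 < s A k -> c < cost s k.
Definition le_hR (s : profile) (A : {set 'I_n}) (c : R) : Prop :=
  forall k, 0 < s A k -> c <= cost s k.

Definition profile_neq (s s' : profile) : Prop :=
  exists A : {set 'I_n}, A != set0 /\ exists j, s' A j <> s A j.

Definition strong_nash (s : profile) : Prop :=
  nash s /\
  ~ exists s' : profile, consumption_profile s' /\ profile_neq s s' /\
      forall A : {set 'I_n}, A != set0 ->
        forall k, s' A k > s A k -> lt_hR s A (cost s' k).

Definition super_strong_nash (s : profile) : Prop :=
  nash s /\
  ~ exists s' : profile, consumption_profile s' /\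
      (forall A : {set 'I_n}, A != set0 ->
        forall k, s' A k > s A k -> le_hR s A (cost s' k)) /\
      (exists A : {set 'I_n}, A != set0 /\
        exists k, 0 < s' A k /\ lt_hR s A (cost s' k)).
End Game.

Definition plateau_height (R : realFieldType) (g : R -> R) (h : R) : Prop :=
  exists x y, 0 <= x /\ 0 <= y /\ x <> y /\ g x = h /\ g y = h.

(* Main.v *)
Require Import Defs.
From HB Require Import structures.
From mathcomp Require Import all_boot all_order all_algebra.
From mathcomp Require Import ring lra.
Import Order.TTheory GRing.Theory Num.Theory.
Local Open Scope ring_scope.

Set Implicit Arguments. Unset Strict Implicit.

Lemma sum_le_eq (R : realFieldType) (I : finType) (P : pred I) (a b : I -> R) :
  (forall i, P i -> a i <= b i) -> \sum_(i | P i) a i = \sum_(i | P i) b i ->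
  forall i, P i -> a i = b i.
Proof.
move=> hle heq i Pi.
have h0 : \sum_(i | P i) (b i - a i) = 0 by rewrite sumrB heq subrr.
have hp : forall i, P i -> 0 <= b i - a i by move=> k Pk; rewrite subr_ge0; apply: hle.
have := psumr_eq0P hp h0 Pi.
by move=> /eqP; rewrite subr_eq0 => /eqP ->.
Qed.

Section Proofs.
Variables (R : realFieldType) (n : nat) (f : 'I_n -> R -> R) (mu : {set 'I_n} -> R).
Hypothesis G : is_game f mu.

Lemma load_ge0 (s : profile R n) : consumption_profile mu s -> forall j, 0 <= load s j.
Proof. move=> hs j; apply: sumr_ge0 => A hA; exact: (proj1 (hs A hA)). Qed.

Lemma sum_load (s : profile R n) : consumption_profile mu s ->
  \sum_j load s j = \sum_(A : {set 'I_n} | A != set0) mu A.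
Proof.
move=> hs; rewrite /load exchange_big /=; apply: eq_bigr => A hA.
exact: (proj2 (proj2 (hs A hA))).
Qed.

Lemma load_eq (s s' : profile R n) : consumption_profile mu s -> consumption_profile mu s' ->
  (forall j, load s' j <= load s j) -> forall j, load s' j = load s j.
Proof.
move=> hs hs' hle j; apply: (@sum_le_eq _ _ predT) => //.
by rewrite (sum_load hs) (sum_load hs').
Qed.

Lemma mem_pos (s : profile R n) A k : consumption_profile mu s -> A != set0 ->
  0 < s A k -> k \in A.
Proof.
move=> hs hA hk; apply/negPn/negP => hn.
by rewrite (proj1 (proj2 (hs A hA)) k hn) ltxx in hk.
Qed.

Lemma exists_pos (s s' : profile R n) A k : consumption_profile mu s ->
  consumption_profile mu s' -> A != set0 -> s A k < s' A k ->
  exists k', 0 < s A k'.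
Proof.
move=> hs hs' hA hk.
have [/existsP [k' hk']|/existsP nex] := boolP [exists k', 0 < s A k']; first by exists k'.
exfalso.
have s0 : forall j, s A j = 0.
  move=> j; apply/eqP; rewrite eq_le (proj1 (hs A hA) j) andbT leNgt.
  by apply/negP => h; apply: nex; exists j.
have : \sum_j s' A j = \sum_j s A j.
  by rewrite (proj2 (proj2 (hs A hA))) (proj2 (proj2 (hs' A hA))).
rewrite [X in _ = X]big1 // => h.
have := psumr_eq0P (fun i _ => proj1 (hs' A hA) i) h (i:=k) isT.
by move=> e; rewrite e s0 ltxx in hk.
Qed.

Lemma exists_gt (s s' : profile R n) A : consumption_profile mu s ->
  consumption_profile mu s' -> A != set0 -> (exists j, s' A j <> s A j) ->
  exists k, s A k < s' A k.
Proof.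
move=> hs hs' hA [j hj].
have [/existsP [k hk]|/existsP nex] := boolP [exists k, s A k < s' A k]; first by exists k.
exfalso; apply: hj; apply: (@sum_le_eq _ _ predT) => //.
  by move=> i _; rewrite leNgt; apply/negP => h; apply: nex; exists i.
by rewrite (proj2 (proj2 (hs A hA))) (proj2 (proj2 (hs' A hA))).
Qed.

Lemma vi_A (s t : profile R n) A : consumption_profile mu s -> consumption_profile mu t ->
  nash f s -> A != set0 ->
  \sum_j s A j * cost f s j <= \sum_j t A j * cost f s j.
Proof.
move=> hs ht hn hA.
have [/existsP [k hk]|/existsP nex] := boolP [exists k, 0 < s A k].
- have -> : \sum_j s A j * cost f s j = \sum_j s A j * cost f s k.
    apply: eq_bigr => j _.
    have [hj|hj] := boolP (0 < s A j).
      congr (_ * _); apply/eqP; rewrite eq_le.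
      rewrite (hn A hA j k hj (mem_pos hs hA hk)).
      by rewrite (hn A hA k j hk (mem_pos hs hA hj)).
    have -> : s A j = 0.
      by apply/eqP; rewrite eq_le (proj1 (hs A hA) j) andbT leNgt.
    by rewrite !mul0r.
  rewrite -mulr_suml (proj2 (proj2 (hs A hA))) -(proj2 (proj2 (ht A hA))) mulr_suml.
  apply: ler_sum => j _.
  have [hj|hj] := boolP (0 < t A j).
    by rewrite ler_pM2l // (hn A hA k j hk (mem_pos ht hA hj)).
  have -> : t A j = 0.
    by apply/eqP; rewrite eq_le (proj1 (ht A hA) j) andbT leNgt.
  by rewrite !mul0r.
- have s0 : forall j, s A j = 0.
    move=> j; apply/eqP; rewrite eq_le (proj1 (hs A hA) j) andbT leNgt.
    by apply/negP => h; apply: nex; exists j.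
  have hmu : \sum_j t A j = 0.
    by rewrite (proj2 (proj2 (ht A hA))) -(proj2 (proj2 (hs A hA))) big1.
  have t0 := psumr_eq0P (fun i _ => proj1 (ht A hA) i) hmu.
  rewrite big1 ?mul0r; last by move=> j _; rewrite s0 mul0r.
  by rewrite big1 // => j _; rewrite t0 // mul0r.
Qed.

Lemma vi_sum (s t : profile R n) : consumption_profile mu s -> consumption_profile mu t ->
  nash f s ->
  \sum_j load s j * cost f s j <= \sum_j load t j * cost f s j.
Proof.
move=> hs ht hn.
rewrite /load.
under eq_bigr do rewrite mulr_suml.
under [X in _ <= X]eq_bigr do rewrite mulr_suml.
rewrite exchange_big /= [X in _ <= X]exchange_big /=.
by apply: ler_sum => A hA; apply: vi_A.
Qed.

Lemma cost_unique (s t : profile R n) : consumption_profile mu s -> consumption_profile mu t ->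
  nash f s -> nash f t -> forall j, load s j = load t j \/ cost f s j = cost f t j.
Proof.
move=> hs ht hns hnt.
set d := fun j => (load t j - load s j) * (cost f s j - cost f t j).
have dle : forall j, 0 <= - d j.
  move=> j; rewrite /d /cost.
  have [h|h] := leP (load s j) (load t j).
    have h1 := proj1 G j _ _ (load_ge0 hs j) h.
    by rewrite -mulrN opprB mulr_ge0 // subr_ge0.
  have h1 := proj1 G j _ _ (load_ge0 ht j) (ltW h).
  by rewrite -mulNr opprB mulr_ge0 // subr_ge0 // ltW.
have sd : 0 <= \sum_j d j.
  have -> : \sum_j d j = (\sum_j load t j * cost f s j - \sum_j load s j * cost f s j)
      + (\sum_j load s j * cost f t j - \sum_j load t j * cost f t j).
    rewrite -!sumrB -big_split /=; apply: eq_bigr => j _; rewrite /d; ring.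
  by rewrite addr_ge0 // subr_ge0; apply: vi_sum.
have s0 : \sum_j - d j = 0.
  apply/eqP; rewrite eq_le sumr_ge0 // andbT sumrN oppr_le0 //.
move=> j; have := psumr_eq0P (fun i _ => dle i) s0 (i:=j) isT.
move/eqP; rewrite oppr_eq0 mulf_eq0 !subr_eq0 => /orP [/eqP ->|/eqP ->]; by [left|right].
Qed.

Lemma partA (s : profile R n) : consumption_profile mu s -> nash f s -> strong_nash f mu s.
Proof.
move=> hs hn; split => //; case=> s' [hs' [[A0 [hA0 hneq]] hcond]].
have key : forall A j, A != set0 -> s A j < s' A j -> cost f s' j < cost f s j.
  move=> A j hA hj.
  have [k' hk'] := exists_pos hs hs' hA hj.
  apply: (lt_le_trans (hcond A hA j hj k' hk')).
  apply: (hn A hA k' j hk'); apply: (mem_pos hs' hA).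
  exact: le_lt_trans (proj1 (hs A hA) j) hj.
have hle : forall j, load s' j <= load s j.
  move=> j.
  have [/existsP [A /andP [hA hj]]|/existsP nex] :=
    boolP [exists A : {set 'I_n}, (A != set0) && (s A j < s' A j)].
    have := key A j hA hj; rewrite /cost => hc.
    rewrite leNgt; apply/negP => hl.
    have := proj1 G j _ _ (load_ge0 hs j) (ltW hl).
    by rewrite leNgt hc.
  apply: ler_sum => A hA; rewrite leNgt; apply/negP => h; apply: nex.
  by exists A; rewrite hA h.
have heq := load_eq hs hs' hle.
have [k hk] := exists_gt hs hs' hA0 hneq.
have := key A0 k hA0 hk.
by rewrite /cost heq ltxx.
Qed.

Lemma partB (s : profile R n) : consumption_profile mu s -> nash f s ->
  (forall j, ~ plateau_height (f j) (cost f s j)) -> super_strong_nash f mu s.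
Proof.
move=> hs hn hnp; split => //; case=> s' [hs' [hcond [A0 [hA0 [k0 [hk0 hlt]]]]]].
have key : forall A j, A != set0 -> s A j < s' A j -> cost f s' j <= cost f s j.
  move=> A j hA hj.
  have [k' hk'] := exists_pos hs hs' hA hj.
  apply: (le_trans (hcond A hA j hj k' hk')).
  apply: (hn A hA k' j hk'); apply: (mem_pos hs' hA).
  exact: le_lt_trans (proj1 (hs A hA) j) hj.
have hle : forall j, load s' j <= load s j.
  move=> j.
  have [/existsP [A /andP [hA hj]]|/existsP nex] :=
    boolP [exists A : {set 'I_n}, (A != set0) && (s A j < s' A j)].
    have := key A j hA hj; rewrite /cost => hc.
    rewrite leNgt; apply/negP => hl.
    have hm := proj1 G j _ _ (load_ge0 hs j) (ltW hl).
    apply: (hnp j); exists (load s j), (load s' j).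
    split; first exact: load_ge0.
    split; first exact: load_ge0.
    split; first by move=> e; rewrite e ltxx in hl.
    split => //.
    by apply/eqP; rewrite eq_le hc hm.
  apply: ler_sum => A hA; rewrite leNgt; apply/negP => h; apply: nex.
  by exists A; rewrite hA h.
have heq := load_eq hs hs' hle.
have hmu : 0 < \sum_j s A0 j.
  rewrite (proj2 (proj2 (hs A0 hA0))) -(proj2 (proj2 (hs' A0 hA0))).
  rewrite (bigD1 k0) //= ltr_wpDr //; apply: sumr_ge0 => i _; exact: (proj1 (hs' A0 hA0)).
have [/existsP [k hk]|/existsP nex] := boolP [exists k, 0 < s A0 k].
  have := hlt k hk; rewrite {1}/cost heq => h1.
  have := hn A0 hA0 k k0 hk (mem_pos hs' hA0 hk0).
  by rewrite leNgt h1.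
exfalso; move: hmu; rewrite big1 ?ltxx // => j _.
apply/eqP; rewrite eq_le (proj1 (hs A0 hA0) j) andbT leNgt.
by apply/negP => h; apply: nex; exists j.
Qed.
End Proofs.

Theorem mainTheorem4 (R : realFieldType) (n : nat)
  (f : 'I_n -> R -> R) (mu : {set 'I_n} -> R) :
  is_game f mu ->
  (forall s : profile R n, consumption_profile mu s -> nash f s ->
     strong_nash f mu s) /\
  ((exists s0 : profile R n, consumption_profile mu s0 /\ nash f s0 /\
      forall j, ~ plateau_height (f j) (cost f s0 j)) ->
   forall s : profile R n, consumption_profile mu s -> nash f s ->
     super_strong_nash f mu s).
Proof.
move=> G; split; first by move=> s; apply: partA.
case=> s0 [hs0 [hn0 hnp]] s hs hn; apply: partB => // j hp; apply: (hnp j).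
have [e|e] := cost_unique G hs hs0 hn hn0 j.
  by rewrite /cost -e.
by rewrite -e.
Qed.
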